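(* Let $\mathcal C$ be an epireflective subcategory of $\mathbf{Top}$ that is closed under finer topologies. If $\{X_i\}$ is a family of semitopological Mal'tsev spaces, then $\mathrm{r}_{\mathcal C}$ preserves the product of $\{X_i\}$, i.e., the canonical map $\mu_{\mathcal C}\colon\mathrm{r}_{\mathcal C}\prod X_i\to\prod\mathrm{r}_{\mathcal C}X_i$ is a homeomorphism.
   Context: An epireflective subcategory $\mathcal C$ of $\mathbf{Top}$ is a full, isomorphism-closed subcategory closed under products and subspaces; each space $X$ has a reflection $\mathrm{r}_{\mathcal C}X\in\mathcal C$ with a continuous surjection $\mathrm{r}_{(X,\mathcal C)}$ through which every continuous map from $X$ into a space of $\mathcal C$ factors uniquely. $\mathcal C$ is closed under finer topologies if $(X,\tau)\in\mathcal C$ and $\rho\supseteq\tau$ a topology on $X$ imply $(X,\rho)\in\mathcal C$. The map $\mu_{\mathcal C}$ is the unique continuous map with $\pi_j\circ\mu_{\mathcal C}=\mathrm{r}_{\mathcal C}(\pi_{X_j})$ for every $j$. A Mal'tsev operation on $X$ is a map $\Phi\colon X^3\to X$ with $\Phi(x,x,y)=\Phi(y,x,x)=y$ for all $x,y$; a semitopological Mal'tsev space is a space admitting a separately continuous Mal'tsev operation. *)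

(* Defs.v *)
From Stdlib Require Import List.
Import ListNotations.

Set Implicit Arguments.

Definition is_topology (T : Type) (o : (T -> Prop) -> Prop) : Prop :=
  o (fun _ => True) /\
  (forall U V, o U -> o V -> o (fun x => U x /\ V x)) /\
  (forall F : (T -> Prop) -> Prop, (forall U, F U -> o U) ->
     o (fun x => exists U, F U /\ U x)).

Record space := Space {
  pt :> Type;
  opn : (pt -> Prop) -> Prop;
  opn_top : is_topology opn }.

Definition continuous {X Y : space} (f : X -> Y) : Prop :=
  forall U, opn Y U -> opn X (fun x => U (f x)).

Definition homeomorphism {X Y : space} (f : X -> Y) : Prop :=
  continuous f /\
  exists g : Y -> X, continuous g /\ (forall x, g (f x) = x) /\ (forall y, f (g y) = y).

(* Product (Tychonoff) topology on forall i, X i: U is open iff every point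
   of U has a basic neighbourhood (finite intersection of preimages of
   open sets under projections) contained in U. *)
Definition prod_opn (I : Type) (X : I -> space) (U : (forall i, X i) -> Prop) : Prop :=
  forall x, U x -> exists l : list {i : I & X i -> Prop},
    (forall p, In p l -> opn (X (projT1 p)) (projT2 p) /\ projT2 p (x (projT1 p))) /\
    (forall y, (forall p, In p l -> projT2 p (y (projT1 p))) -> U y).

Lemma prod_opn_top (I : Type) (X : I -> space) : is_topology (@prod_opn I X).
Proof.
split; [|split].
- intros x _. exists nil. split; [intros p []|intros; exact Logic.I].
- intros U V HU HV x [Ux Vx].
  destruct (HU x Ux) as [l1 [H1 K1]]. destruct (HV x Vx) as [l2 [H2 K2]].
  exists (l1 ++ l2). split.
  + intros p Hp. apply in_app_or in Hp. destruct Hp; auto.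
  + intros y Hy. split.
    * apply K1. intros p Hp. apply Hy. apply in_or_app. auto.
    * apply K2. intros p Hp. apply Hy. apply in_or_app. auto.
- intros F HF x [U [FU Ux]].
  destruct (HF U FU x Ux) as [l [H K]]. exists l. split; auto.
  intros y Hy. exists U. split; auto.
Qed.

Definition prod_space (I : Type) (X : I -> space) : space :=
  @Space (forall i, X i) (@prod_opn I X) (@prod_opn_top I X).

Definition sub_opn (X : space) (A : X -> Prop) (U : {x : X | A x} -> Prop) : Prop :=
  exists V, opn X V /\ forall y, U y <-> V (proj1_sig y).

Lemma sub_opn_top (X : space) (A : X -> Prop) : is_topology (@sub_opn X A).
Proof.
destruct (opn_top X) as [T1 [T2 T3]].
split; [|split].
- exists (fun _ => True). split; [exact T1|]. intros; tauto.
- intros U V [U' [HU' EU]] [V' [HV' EV]]. exists (fun x => U' x /\ V' x).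
  split; [auto|]. intros y. rewrite EU, EV. tauto.
- intros F HF.
  exists (fun x => exists W, (exists U, F U /\ opn X W /\ forall y, U y <-> W (proj1_sig y)) /\ W x).
  split.
  + apply T3. intros W [U [_ [HW _]]]. exact HW.
  + intros y. split.
    * intros [U [FU Uy]]. destruct (HF U FU) as [W [HW EW]].
      exists W. split; [exists U; auto|]. apply EW; exact Uy.
    * intros [W [[U [FU [_ EW]]] Wy]]. exists U. split; [exact FU|]. apply EW; exact Wy.
Qed.

Definition sub_space (X : space) (A : X -> Prop) : space :=
  @Space {x : X | A x} (@sub_opn X A) (@sub_opn_top X A).

(* Epireflective subcategory of Top (as in the paper): a full,
   isomorphism-closed subcategory (a class of spaces) closed under
   products and subspaces. Fullness is automatic for a class of spaces. *)
Definition iso_closed (C : space -> Prop) : Prop :=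
  forall X Y : space, C X -> (exists f : X -> Y, homeomorphism f) -> C Y.

Definition closed_under_products (C : space -> Prop) : Prop :=
  forall (I : Type) (X : I -> space), (forall i, C (X i)) -> C (@prod_space I X).

Definition closed_under_subspaces (C : space -> Prop) : Prop :=
  forall (X : space) (A : X -> Prop), C X -> C (@sub_space X A).

Definition epireflective (C : space -> Prop) : Prop :=
  iso_closed C /\ closed_under_products C /\ closed_under_subspaces C.

Definition closed_under_finer (C : space -> Prop) : Prop :=
  forall X : space, C X ->
  forall (rho : (X -> Prop) -> Prop) (hrho : is_topology rho),
    (forall U, opn X U -> rho U) -> C (@Space (pt X) rho hrho).

Definition is_reflection (C : space -> Prop) (X R : space) (q : X -> R) : Prop :=
  C R /\ continuous q /\ (forall r : R, exists x : X, q x = r) /\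
  forall (Z : space), C Z -> forall f : X -> Z, continuous f ->
    exists! g : R -> Z, continuous g /\ forall x, g (q x) = f x.

Definition semitop_maltsev (X : space) : Prop :=
  exists Phi : X -> X -> X -> X,
    (forall a b : X, continuous (fun x : X => (Phi x a b : X))) /\
    (forall a b : X, continuous (fun y : X => (Phi a y b : X))) /\
    (forall a b : X, continuous (fun z : X => (Phi a b z : X))) /\
    (forall x y : X, Phi x x y = y /\ Phi y x x = y).

(* Main.v *)
Require Import Defs.
From Stdlib Require Import List Classical ClassicalEpsilon FunctionalExtensionality PropExtensionality Eqdep.

Lemma opn_ext {X : space} {U V : X -> Prop} :
  (forall x, U x <-> V x) -> opn X U -> opn X V.
Proof.
  intros H HU. assert (U = V) as <-; [|exact HU].
  apply functional_extensionality; intro x; apply propositional_extensionality; apply H.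
Qed.

Lemma opn_full (X : space) : opn X (fun _ => True).
Proof. destruct (opn_top X) as [h _]; exact h. Qed.

Lemma opn_inter (X : space) (U V : X -> Prop) : opn X U -> opn X V -> opn X (fun x => U x /\ V x).
Proof. destruct (opn_top X) as [_ [h _]]; apply h. Qed.

Lemma opn_union (X : space) (F : (X -> Prop) -> Prop) :
  (forall U, F U -> opn X U) -> opn X (fun x => exists U, F U /\ U x).
Proof. destruct (opn_top X) as [_ [_ h]]; apply h. Qed.

Lemma opn_const (X : space) (P : Prop) : opn X (fun _ => P).
Proof.
  destruct (classic P) as [h|h].
  - apply (opn_ext (U := fun _ => True)); [intros; tauto|apply opn_full].
  - apply (opn_ext (U := fun x => exists U, (fun _ : X -> Prop => False) U /\ U x)).
    + intros x; split; [intros [U [[] _]] | intros p; contradiction].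
    + apply opn_union; intros U [].
Qed.

Lemma open_local (X : space) (S : X -> Prop) :
  (forall x, S x -> exists W, opn X W /\ W x /\ (forall y, W y -> S y)) -> opn X S.
Proof.
  intros H. apply (opn_ext (U := fun x => exists W, (opn X W /\ forall y, W y -> S y) /\ W x)).
  - intros x; split.
    + intros [W [[_ HW] Wx]]; auto.
    + intros Sx; destruct (H x Sx) as [W [HW [Wx HWS]]]; eauto.
  - apply opn_union; intros W [h _]; exact h.
Qed.

Lemma opn_list {Y : space} {A : Type} (l : list A) (P : A -> Y -> Prop) :
  (forall a, In a l -> opn Y (P a)) -> opn Y (fun y => forall a, In a l -> P a y).
Proof.
  induction l as [|a l IH]; intros H.
  - apply (opn_ext (U := fun _ => True)); [intros; split; [intros _ a []|auto]|apply opn_full].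
  - apply (opn_ext (U := fun y => P a y /\ (forall b, In b l -> P b y))).
    + intros y; split.
      * intros [h1 h2] b [<-|hb]; auto.
      * intros h; split; [apply h; left; reflexivity|intros b hb; apply h; right; exact hb].
    + apply opn_inter; [apply H; left; reflexivity|apply IH; intros b hb; apply H; right; exact hb].
Qed.

Lemma cont_comp {X Y Z : space} (f : X -> Y) (g : Y -> Z) :
  continuous f -> continuous g -> continuous (fun x => g (f x)).
Proof. intros hf hg U hU. exact (hf _ (hg U hU)). Qed.

Lemma cont_id {X : space} : continuous (fun x : X => x).
Proof. intros U hU; exact hU. Qed.

Lemma cont_const {X Y : space} (c : Y) : continuous (fun _ : X => c).
Proof. intros U _; apply opn_const. Qed.

Lemma prod_cont {Y : space} {I : Type} {X : I -> space} (f : Y -> prod_space X) :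
  (forall i, continuous (fun y => f y i)) -> continuous f.
Proof.
  intros Hf U HU. apply open_local. intros y Hy.
  destruct (HU (f y) Hy) as [l [H1 H2]].
  exists (fun y' => forall p, In p l -> projT2 p (f y' (projT1 p))). split; [|split].
  - apply opn_list. intros p hp. apply (Hf (projT1 p)). apply H1; exact hp.
  - intros p hp; apply H1; exact hp.
  - intros y' hy'. apply H2. exact hy'.
Qed.

Lemma dep_choice {I : Type} {T : I -> Type} {P : forall i, T i -> Prop} :
  (forall i, exists t, P i t) -> exists f : forall i, T i, forall i, P i (f i).
Proof.
  intros H. exists (fun i => proj1_sig (constructive_indefinite_description _ (H i))).
  intro i. exact (proj2_sig (constructive_indefinite_description _ (H i))).
Qed.

Lemma refl_factor C (X R : space) q (H : is_reflection C X R q) (Z : space) (HZ : C Z)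
  (f : X -> Z) (hf : continuous f) a b : q a = q b -> f a = f b.
Proof.
  destruct H as [_ [_ [_ U]]]. destruct (U Z HZ f hf) as [g [[_ hg] _]].
  intros e. rewrite <- (hg a), <- (hg b), e. reflexivity.
Qed.
Arguments refl_factor C {X R q} H Z HZ f hf a b.


Lemma refl_quot C (Hfin : closed_under_finer C) (X R : space) q
  (H : is_reflection C X R q) (U : R -> Prop) :
  opn X (fun x => U (q x)) -> opn R U.
Proof.
  destruct H as [CR [qc [qs U']]].
  pose (rho := fun V : R -> Prop => opn X (fun x => V (q x))).
  assert (hrho : is_topology rho).
  { destruct (opn_top X) as [t1 [t2 t3]]. split; [|split]; unfold rho.
    - exact t1.
    - intros A B hA hB. exact (t2 _ _ hA hB).
    - intros F hF.
      apply (opn_ext (U := fun x => exists V, (exists W, F W /\ forall y, V y <-> W (q y)) /\ V x)).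
      + intros x; cbv beta; split.
        * intros [V [[W [FW e]] Vx]]. exists W; split; [exact FW|apply e; exact Vx].
        * intros [W [FW Wx]]. exists (fun y => W (q y)).
          split; [exists W; split; [exact FW|intros; tauto]|exact Wx].
      + apply t3. intros V [W [FW e]].
        apply (opn_ext (U := fun y => W (q y))); [intros y; symmetry; apply e | apply hF; exact FW]. }
  pose (Z := @Space (pt R) rho hrho).
  assert (CZ : C Z).
  { apply Hfin; [exact CR|]. intros V hV. unfold rho. apply qc; exact hV. }
  assert (qcZ : @continuous X Z q). { intros V hV. exact hV. }
  destruct (U' Z CZ q qcZ) as [g [[gc gq] _]].
  assert (gid : forall r, g r = r). { intro r; destruct (qs r) as [x <-]; apply gq. }
  intro hU. specialize (gc U hU).
  apply (opn_ext (U := fun r => U (g r))); [intros r; rewrite gid; tauto|exact gc].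
Qed.
Arguments refl_quot C Hfin {X R q} H U.


Lemma q_open C (Hfin : closed_under_finer C) (X R : space) q (HM : semitop_maltsev X)
  (H : is_reflection C X R q) (U : X -> Prop) :
  opn X U -> opn R (fun r => exists t, U t /\ q t = r).
Proof.
  intros HU. apply (refl_quot C Hfin H). apply open_local. intros t [u [Uu e]].
  pose proof H as [CR [qc _]].
  destruct HM as [Phi [c1 [c2 [c3 m]]]].
  exists (fun s => U (Phi s t u)). split; [|split].
  - apply (c1 t u U HU).
  - destruct (m t u) as [h _]; rewrite h; exact Uu.
  - intros s hs. exists (Phi s t u). split; [exact hs|].
    assert (E : q (Phi s t u) = q (Phi s t t)).
    { apply (refl_factor C H R CR (fun z => q (Phi s t z))); [|exact e].
      apply cont_comp; [apply c3|exact qc]. }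
    rewrite E. destruct (m t s) as [_ h]. rewrite h. reflexivity.
Qed.
Arguments q_open C Hfin {X R q} HM H {U}.


Section Main.
Variables (C : space -> Prop) (I : Type) (X : I -> space) (R : I -> space)
  (q : forall i, X i -> R i) (Hq : forall i, is_reflection C (X i) (R i) (q i))
  (RP : space) (qP : prod_space X -> RP) (HqP : is_reflection C (prod_space X) RP qP).

Lemma coord_change (z z' : prod_space X) (j : I) :
  (forall i, i <> j -> z i = z' i) -> q j (z j) = q j (z' j) -> qP z = qP z'.
Proof.
  intros hne hj. destruct HqP as [CRP [qPc _]].
  pose (e := fun (t : X j) => (fun i => match excluded_middle_informative (j = i) with
       | left h => eq_rect j (fun k => pt (X k)) t i h | right _ => z i end) : prod_space X).
  assert (ec : continuous e).
  { apply prod_cont. intros i. unfold e. cbv beta.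
    destruct (excluded_middle_informative (j = i)) as [h|h].
    - subst i. cbn. apply cont_id.
    - apply cont_const. }
  assert (e1 : e (z j) = z).
  { apply functional_extensionality_dep; intro i; unfold e.
    destruct (excluded_middle_informative (j = i)) as [h|h]; [subst i; reflexivity|reflexivity]. }
  assert (e2 : e (z' j) = z').
  { apply functional_extensionality_dep; intro i; unfold e.
    destruct (excluded_middle_informative (j = i)) as [h|h]; [subst i; reflexivity|].
    apply hne. intro E; apply h; symmetry; exact E. }
  pose proof (refl_factor C (Hq j) RP CRP (fun t => qP (e t)) (cont_comp _ _ ec qPc) (z j) (z' j) hj) as K.
  cbv beta in K. rewrite e1, e2 in K. exact K.
Qed.

Definition wmod (x y : prod_space X) (L : list I) : prod_space X :=
  fun i => match excluded_middle_informative (In i L) with left _ => y i | right _ => x i end.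

Lemma wmod_eq (x y : prod_space X) (hxy : forall i, q i (x i) = q i (y i)) (L : list I) :
  qP (wmod x y L) = qP x.
Proof.
  induction L as [|j L IH].
  - f_equal. apply functional_extensionality_dep; intro i; unfold wmod.
    destruct (excluded_middle_informative (In i nil)) as [[]|_]; reflexivity.
  - rewrite <- IH. apply (coord_change _ _ j).
    + intros i hi. unfold wmod.
      destruct (excluded_middle_informative (In i (j :: L))) as [a|a];
      destruct (excluded_middle_informative (In i L)) as [b|b]; try reflexivity.
      * exfalso. destruct a as [a|a]; [apply hi; symmetry; exact a|contradiction].
      * exfalso. apply a; right; exact b.
    + unfold wmod.
      destruct (excluded_middle_informative (In j (j :: L))) as [a|a];
      destruct (excluded_middle_informative (In j L)) as [b|b]; try reflexivity; [symmetry; apply hxy | exfalso; apply a; left; reflexivity].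



Qed.

Lemma indist (x y : prod_space X) (hxy : forall i, q i (x i) = q i (y i)) (V : RP -> Prop) :
  opn RP V -> V (qP y) -> V (qP x).
Proof.
  intros hV hy. pose proof HqP as [CRP [qPc _]].
  pose proof (qPc V hV) as ho. destruct (ho y hy) as [l [H1 H2]].
  rewrite <- (wmod_eq x y hxy (map (@projT1 _ _) l)). apply H2.
  intros p hp. unfold wmod.
  destruct (excluded_middle_informative (In (projT1 p) (map (@projT1 _ _) l))) as [a|a].
  - apply H1; exact hp.
  - exfalso; apply a; apply in_map; exact hp.
Qed.

Lemma qP_inj (x y : prod_space X) (hxy : forall i, q i (x i) = q i (y i)) : qP x = qP y.
Proof.
  pose proof HqP as [CRP _].
  destruct (classic (qP x = qP y)) as [h|h]; [exact h|exfalso].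
  assert (hyx : forall i, q i (y i) = q i (x i)) by (intro i; symmetry; apply hxy).
  assert (hq : forall j (u v : X j), q j u = q j v -> u = v).
  { intros j u v e. destruct (classic (u = v)) as [h'|h']; [exact h'|exfalso]. apply h.
    pose (f := fun t : X j => if excluded_middle_informative (t = u) then qP x else qP y).
    assert (fc : continuous f).
    { intros V hV. apply (opn_ext (U := fun _ => V (qP x))); [|apply opn_const].
      intros t. unfold f. destruct (excluded_middle_informative (t = u)); [tauto|].
      split; [apply (indist y x hyx V hV)|apply (indist x y hxy V hV)]. }
    pose proof (refl_factor C (Hq j) RP CRP f fc u v e) as K. unfold f in K.
    destruct (excluded_middle_informative (u = u)) as [_|n]; [|congruence].
    destruct (excluded_middle_informative (v = u)) as [k|_]; [congruence|exact K]. }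
  apply h. f_equal. apply functional_extensionality_dep. intro i. apply hq. apply hxy.
Qed.

End Main.

Lemma B_open {I : Type} {X : I -> space} (l : list {i : I & X i -> Prop}) :
  (forall p, In p l -> opn (X (projT1 p)) (projT2 p)) ->
  forall i, opn (X i) (fun t => forall A, In (existT (fun k => X k -> Prop) i A) l -> A t).
Proof.
  induction l as [|[k A0] l IH]; intros Hl i.
  - apply (opn_ext (U := fun _ => True)); [intros t; split; [intros _ A []|auto]|apply opn_full].
  - destruct (classic (k = i)) as [e|ne].
    + subst k. apply (opn_ext (U := fun t => A0 t /\ forall A, In (existT (fun k => X k -> Prop) i A) l -> A t)).
      * intros t; split.
        -- intros [h1 h2] A [hA|hA].
           ++ apply inj_pair2 in hA. subst; exact h1.
           ++ exact (h2 A hA).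
        -- intros h; split; [apply h; left; reflexivity|intros A hA; apply h; right; exact hA].
      * apply opn_inter.
        -- apply (Hl (existT _ i A0)); left; reflexivity.
        -- apply IH; intros p hp; apply Hl; right; exact hp.
    + apply (opn_ext (U := fun t => forall A, In (existT (fun k => X k -> Prop) i A) l -> A t)).
      * intros t; split.
        -- intros h A [hA|hA].
           ++ exfalso; apply ne; exact (f_equal (@projT1 _ _) hA).
           ++ exact (h A hA).
        -- intros h A hA; apply h; right; exact hA.
      * apply IH; intros p hp; apply Hl; right; exact hp.
Qed.

Lemma p_open {I : Type} {X R : I -> space} (q : forall i, X i -> R i)
  (qo : forall i U, opn (X i) U -> opn (R i) (fun r => exists t, U t /\ q i t = r))
  (qs : forall i r, exists t, q i t = r) (W : prod_space X -> Prop) :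
  opn (prod_space X) W ->
  opn (prod_space R) (fun r => exists w, W w /\ (fun i => q i (w i)) = r).
Proof.
  intros HW r [w [Ww <-]].
  destruct (HW w Ww) as [l [H1 H2]].
  pose (B := fun i (t : X i) => forall A, In (existT (fun k => X k -> Prop) i A) l -> A t).
  exists (map (fun p => existT (fun i => R i -> Prop) (projT1 p)
                 (fun r => exists t, B (projT1 p) t /\ q _ t = r)) l).
  split.
  - intros p' hp'. apply in_map_iff in hp'. destruct hp' as [p [<- hp]]. simpl. split.
    + apply qo. apply B_open. intros; apply H1; assumption.
    + exists (w (projT1 p)). split; [|reflexivity]. intros A hA. exact (proj2 (H1 _ hA)).
  - intros r' hr'.
    assert (hc : forall i, exists t, q i t = r' i /\ ((exists t0, B i t0 /\ q i t0 = r' i) -> B i t)).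
    { intro i. destruct (classic (exists t0, B i t0 /\ q i t0 = r' i)) as [[t0 [h1 h2]]|n].
      - exists t0; auto.
      - destruct (qs i (r' i)) as [t ht]; exists t; split; [exact ht| intros h; contradiction]. }
    destruct (dep_choice hc) as [w' hw'].
    exists w'. split.
    + apply H2. intros [i A] hp. simpl. destruct (hw' i) as [_ hB].
      assert (hex : exists t0, B i t0 /\ q i t0 = r' i).
      { pose proof (hr' (existT (fun i => R i -> Prop) i (fun r => exists t, B i t /\ q i t = r))) as hh.
        apply hh. apply in_map_iff. exists (existT _ i A). split; [reflexivity|exact hp]. }
      exact (hB hex A hp).
    + apply functional_extensionality_dep. intro i. exact (proj1 (hw' i)).
Qed.

Theorem theorem4p9
  (C : space -> Prop) (HC : epireflective C) (Hfin : closed_under_finer C)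
  (I : Type) (X : I -> space) (HX : forall i, semitop_maltsev (X i))
  (R : I -> space) (q : forall i, X i -> R i)
  (Hq : forall i, is_reflection C (X i) (R i) (q i))
  (RP : space) (qP : prod_space X -> RP)
  (HqP : is_reflection C (prod_space X) RP qP)
  (mu : RP -> prod_space R) (Hmu_cont : continuous mu)
  (Hmu : forall (x : prod_space X) (j : I), mu (qP x) j = q j (x j)) :
  homeomorphism mu.
Proof.
  pose proof HqP as [CRP [qPc [qPs _]]].
  assert (qo : forall i U, opn (X i) U -> opn (R i) (fun r => exists t, U t /\ q i t = r)).
  { intros i U hU. exact (q_open C Hfin (HX i) (Hq i) hU). }
  assert (qs : forall i r, exists t, q i t = r).
  { intros i; destruct (Hq i) as [_ [_ [h _]]]; exact h. }
  assert (mp : forall x : prod_space X, mu (qP x) = (fun i => q i (x i))).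
  { intro x; apply functional_extensionality_dep; intro j; apply Hmu. }
  assert (inj : forall a b, mu a = mu b -> a = b).
  { intros a b e. destruct (qPs a) as [x <-]. destruct (qPs b) as [y <-].
    apply (qP_inj C I X R q Hq RP qP HqP). intro i. rewrite <- (Hmu x i), <- (Hmu y i), e. reflexivity. }
  assert (surj : forall r : prod_space R, exists a, mu a = r).
  { intros r. destruct (dep_choice (fun i => qs i (r i))) as [x hx]. exists (qP x).
    rewrite mp. apply functional_extensionality_dep; intro i; apply hx. }
  pose (g := fun r => proj1_sig (constructive_indefinite_description _ (surj r))).
  assert (hg : forall r, mu (g r) = r).
  { intro r. exact (proj2_sig (constructive_indefinite_description _ (surj r))). }
  split; [exact Hmu_cont|]. exists g. split; [|split].
  - intros V hV.
    apply (opn_ext (X := prod_space R) (U := fun r => exists w, (fun z => V (qP z)) w /\ (fun i => q i (w i)) = r)).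
    + intros r; split.
      * intros [w [Vw e]]. assert (g r = qP w) as ->; [|exact Vw].
        apply inj. rewrite hg, mp, e. reflexivity.
      * intros Vr. destruct (qPs (g r)) as [w hw]. exists w. split.
        -- cbv beta. rewrite hw; exact Vr.
        -- rewrite <- mp, hw, hg; reflexivity.
    + apply (p_open q qo qs). apply qPc; exact hV.
  - intros a; apply inj; rewrite hg; reflexivity.
  - exact hg.
Qed.
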